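(* The graph $T_6$ is a minimal non-word-representable graph: $T_6$ is not word-representable, but every graph obtained from $T_6$ by deleting one vertex is word-representable.
   Context: A graph $G=(V,E)$ is word-representable if there exists a word $w$ over the alphabet $V$ such that for all distinct $x,y\in V$, the letters $x$ and $y$ alternate in $w$ if and only if $xy\in E$ (alternation meaning that deleting all letters other than $x$ and $y$ leaves $xyxy\cdots$ or $yxyx\cdots$). The graph $T_6$ has vertex set $\{1,\dots,9\}$; the vertices $1,2,3,4,5$ form a clique, the vertices $6,7,8,9$ form an independent set, and the remaining edges are: $6$ is adjacent to $1,2,3$; $7$ is adjacent to $1,2$; $8$ is adjacent to $1,4$; $9$ is adjacent to $2,5$. *)

(* Defs.v *)
From mathcomp Require Import all_boot all_order.
Set Implicit Arguments. Unset Strict Implicit. Unset Printing Implicit Defensive.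

(* A simple graph: vertex set a finType T, symmetric irreflexive edge relation e. *)

Definition alternate (T : eqType) (w : seq T) (x y : T) : bool :=
  sorted (fun a b => a != b) [seq z <- w | (z == x) || (z == y)].

Definition word_representable (T : finType) (e : rel T) : Prop :=
  exists w : seq T, (forall x : T, x \in w) /\
    forall x y : T, x != y -> (alternate w x y <-> e x y).

Definition del_vertex_type (T : finType) (v : T) := {x : T | x != v}.
Definition del_vertex (T : finType) (e : rel T) (v : T) : rel (del_vertex_type v) :=
  fun x y => e (val x) (val y).

(* T6 on vertices 'I_9, where ordinal i represents vertex i+1 of the paper. *)
Definition T6_edge_nat (a b : nat) : bool :=
  [&& (1 <= a <= 5), (1 <= b <= 5) & a != b]
  || ((a == 6) && (b \in [:: 1; 2; 3]))
  || ((a == 7) && (b \in [:: 1; 2]))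
  || ((a == 8) && (b \in [:: 1; 4]))
  || ((a == 9) && (b \in [:: 2; 5])).

Definition T6 : rel 'I_9 := fun i j =>
  T6_edge_nat i.+1 j.+1 || T6_edge_nat j.+1 i.+1.
Arguments del_vertex {T} e v.

(* Main.v *)
Require Import Defs.
From mathcomp Require Import all_boot all_order.
Set Implicit Arguments. Unset Strict Implicit. Unset Printing Implicit Defensive.

Section Words.
Variable T : eqType.

Fixpoint Af (x y : T) (s : bool) (w : seq T) : bool :=
  match w with
  | [::] => true
  | z :: w' => if z == x then ~~ s && Af x y true w'
               else if z == y then s && Af x y false w'
               else Af x y s w'
  end.

Lemma Af_path x y s w : x != y ->
  Af x y s w = path (fun a b => a != b) (if s then x else y)
                 [seq z <- w | (z == x) || (z == y)].
Proof.
move=> nxy; elim: w s => [|z w IH] s //=.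
case: (eqVneq z x) => [->|zx] /=.
  by rewrite IH; case: s => /=; rewrite ?eqxx // eq_sym nxy.
case: (eqVneq z y) => [->|zy] /=; last by rewrite IH.
by rewrite IH; case: s => /=; rewrite ?eqxx ?nxy ?(eq_sym y x) //. 
Qed.

Lemma alt_Af w x y : x != y ->
  alternate w x y = Af x y false w || Af y x false w.
Proof.
move=> nxy; rewrite /alternate Af_path // Af_path 1?eq_sym //=.
rewrite (eq_filter (a2 := fun z => (z == x) || (z == y))); last by move=> z; rewrite orbC.
case E: [seq z <- w | (z == x) || (z == y)] => [|z f] //=.
have : z \in [seq z <- w | (z == x) || (z == y)] by rewrite E inE eqxx.
rewrite mem_filter => /andP[/orP[]/eqP-> _].
  by rewrite eqxx /= orbF (eq_sym y x) nxy.
by rewrite eqxx nxy.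
Qed.

Lemma Af_anti x y w : x != y -> x \in w -> Af x y false w -> Af y x false w -> False.
Proof.
move=> nxy; elim: w => [|z w IH] //=; rewrite inE.
case: (eqVneq z x) => [->|zx] /=.
  by rewrite (negbTE nxy).
case: (eqVneq z y) => [_|zy] //= xw.
Qed.

Lemma Af_chain a b c d w : uniq [:: a; b; c; d] ->
  forall s1 s2 s3 s4 : bool, (s1 + s2 + s3 = s4)%N ->
  Af a b s1 w -> Af b c s2 w -> Af c d s3 w -> Af a d s4 w ->
  Af a c (s1 || s2) w && Af b d (s2 || s3) w.
Proof.
rewrite /= !inE !negb_or => /and4P[/and3P[ab ac ad] /andP[bc bd] cd _].
have ba : b != a by rewrite eq_sym.
have ca : c != a by rewrite eq_sym.
have da : d != a by rewrite eq_sym.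
have cb : c != b by rewrite eq_sym.
have db : d != b by rewrite eq_sym.
have dc : d != c by rewrite eq_sym.
elim: w => [|z w IH] s1 s2 s3 s4 E //=.
case: (eqVneq z a) => [->|za].
  rewrite ?eqxx ?(negbTE ab) ?(negbTE ac) ?(negbTE ad).
  case: s1 s2 s3 s4 E => [] [] [] [] //= _ H1 H2 H3 H4; by apply: (IH true false false true).
case: (eqVneq z b) => [->|zb].
  rewrite ?eqxx ?(negbTE ba) ?(negbTE bc) ?(negbTE bd).
  case: s1 s2 s3 s4 E => [] [] [] [] //= _ H1 H2 H3 H4.
  by apply: (IH false true false true).
case: (eqVneq z c) => [->|zc].
  rewrite ?eqxx ?(negbTE ca) ?(negbTE cb) ?(negbTE cd).
  case: s1 s2 s3 s4 E => [] [] [] [] //= _ H1 H2 H3 H4.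
  by apply: (IH false false true true).
case: (eqVneq z d) => [_|zd].
  rewrite ?eqxx ?(negbTE da) ?(negbTE db) ?(negbTE dc).
  case: s1 s2 s3 s4 E => [] [] [] [] //= _ H1 H2 H3 H4.
  by apply: (IH false false false false).
idtac.
move=> H1 H2 H3 H4; exact: IH E H1 H2 H3 H4.
Qed.

End Words.

Definition T6n (a b : nat) := T6_edge_nat a.+1 b.+1 || T6_edge_nat b.+1 a.+1.

Definition edges_n : seq (nat * nat) := Eval vm_compute in
  [seq ab <- [seq (a, b) | a <- iota 0 9, b <- iota 0 9] | (ab.1 < ab.2) && T6n ab.1 ab.2].

Definition orient (bs : seq bool) (a b : nat) : bool :=
  if (a < b) && T6n a b then nth false bs (index (a, b) edges_n)
  else if (b < a) && T6n a b then ~~ nth false bs (index (b, a) edges_n)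
  else false.

Definition L4 : seq (nat * nat * nat * nat) := [:: (0,2,1,6); (0,2,3,7); (0,4,2,5); (0,4,3,7); (0,5,1,6); (0,5,2,4); (0,6,1,2); (0,6,1,5); (0,7,3,2); (0,7,3,4); (1,2,0,6); (1,2,4,8); (1,3,2,5); (1,3,4,8); (1,5,0,6); (1,5,2,3); (1,6,0,2); (1,6,0,5); (1,8,4,2); (1,8,4,3); (2,0,6,1); (2,0,7,3); (2,1,6,0); (2,1,8,4); (2,3,1,5); (2,3,7,0); (2,4,0,5); (2,4,8,1); (2,5,0,4); (2,5,1,3); (3,1,5,2); (3,1,8,4); (3,2,0,7); (3,2,5,1); (3,4,0,7); (3,4,8,1); (3,7,0,2); (3,7,0,4); (4,0,5,2); (4,0,7,3); (4,2,1,8); (4,2,5,0); (4,3,1,8); (4,3,7,0); (4,8,1,2); (4,8,1,3); (5,0,4,2); (5,0,6,1); (5,1,3,2); (5,1,6,0); (5,2,3,1); (5,2,4,0); (6,0,2,1); (6,0,5,1); (6,1,2,0); (6,1,5,0); (7,0,2,3); (7,0,4,3); (7,3,2,0); (7,3,4,0); (8,1,2,4); (8,1,3,4); (8,4,2,1); (8,4,3,1)].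

Definition cl4 (O : nat -> nat -> bool) (q : nat * nat * nat * nat) : bool :=
  let: (a, b, c, d) := q in
  (uniq [:: a; b; c; d] && all (fun i => i < 9) [:: a; b; c; d]) ==>
  ((O a b && O b c && O c d && O a d) ==> (O a c && O b d)).

Definition Fr (O : nat -> nat -> bool) := all (cl4 O) L4.

Definition allb (P : bool -> bool) := P true && P false.
Lemma allbP P : allb P -> forall b, P b.
Proof. by case/andP=> ? ? []. Qed.

Definition FF (b0 b1 b2 b3 b4 b5 b6 b7 b8 b9 b10 b11 b12 b13 b14 b15 b16 b17 b18 : bool) : bool :=
  (((b1) && (~~ b7) && (b11) && (b5)) ==> ((b0) && (false))) &&
  ((((b1) && (b13) && (b17) && (b6)) ==> ((b2) && (false))) &&
  ((((b3) && (~~ b14) && (b15) && (b4)) ==> ((b1) && (false))) &&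
  ((((b3) && (~~ b16) && (b17) && (b6)) ==> ((b2) && (false))) &&
  ((((b4) && (~~ b10) && (b11) && (b5)) ==> ((b0) && (false))) &&
  ((((b4) && (~~ b15) && (b14) && (b3)) ==> ((b1) && (false))) &&
  ((((b5) && (~~ b11) && (b7) && (b1)) ==> ((b0) && (false))) &&
  ((((b5) && (~~ b11) && (b10) && (b4)) ==> ((b0) && (false))) &&
  ((((b6) && (~~ b17) && (~~ b13) && (b1)) ==> ((b2) && (false))) &&
  ((((b6) && (~~ b17) && (b16) && (b3)) ==> ((b2) && (false))) &&
  ((((b7) && (~~ b1) && (b5) && (b11)) ==> ((~~ b0) && (false))) &&
  ((((b7) && (b14) && (b18) && (b12)) ==> ((b9) && (false))) &&
  ((((b8) && (~~ b13) && (b15) && (b10)) ==> ((b7) && (false))) &&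
  ((((b8) && (b16) && (b18) && (b12)) ==> ((b9) && (false))) &&
  ((((b10) && (~~ b4) && (b5) && (b11)) ==> ((~~ b0) && (false))) &&
  ((((b10) && (~~ b15) && (b13) && (b8)) ==> ((b7) && (false))) &&
  ((((b11) && (~~ b5) && (b1) && (b7)) ==> ((~~ b0) && (false))) &&
  ((((b11) && (~~ b5) && (b4) && (b10)) ==> ((~~ b0) && (false))) &&
  ((((b12) && (~~ b18) && (~~ b14) && (b7)) ==> ((b9) && (false))) &&
  ((((b12) && (~~ b18) && (~~ b16) && (b8)) ==> ((b9) && (false))) &&
  ((((~~ b1) && (b5) && (~~ b11) && (~~ b7)) ==> ((false) && (b0))) &&
  ((((~~ b1) && (b6) && (~~ b17) && (b13)) ==> ((false) && (b2))) &&
  ((((~~ b7) && (b11) && (~~ b5) && (~~ b1)) ==> ((false) && (~~ b0))) &&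
  ((((~~ b7) && (b12) && (~~ b18) && (b14)) ==> ((false) && (b9))) &&
  ((((b13) && (~~ b8) && (b10) && (b15)) ==> ((~~ b7) && (false))) &&
  ((((b13) && (b17) && (~~ b6) && (~~ b1)) ==> ((false) && (~~ b2))) &&
  ((((b14) && (~~ b3) && (b4) && (b15)) ==> ((~~ b1) && (false))) &&
  ((((b14) && (b18) && (~~ b12) && (~~ b7)) ==> ((false) && (~~ b9))) &&
  ((((b15) && (~~ b4) && (b3) && (b14)) ==> ((~~ b1) && (false))) &&
  ((((b15) && (~~ b10) && (b8) && (b13)) ==> ((~~ b7) && (false))) &&
  ((((~~ b8) && (b10) && (~~ b15) && (~~ b13)) ==> ((false) && (b7))) &&
  ((((~~ b8) && (b12) && (~~ b18) && (b16)) ==> ((false) && (b9))) &&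
  ((((~~ b13) && (~~ b1) && (b6) && (b17)) ==> ((~~ b2) && (false))) &&
  ((((~~ b13) && (b15) && (~~ b10) && (~~ b8)) ==> ((false) && (~~ b7))) &&
  ((((b16) && (~~ b3) && (b6) && (b17)) ==> ((~~ b2) && (false))) &&
  ((((b16) && (b18) && (~~ b12) && (~~ b8)) ==> ((false) && (~~ b9))) &&
  ((((b17) && (~~ b6) && (b1) && (~~ b13)) ==> ((~~ b2) && (false))) &&
  ((((b17) && (~~ b6) && (b3) && (b16)) ==> ((~~ b2) && (false))) &&
  ((((~~ b3) && (b4) && (~~ b15) && (~~ b14)) ==> ((false) && (b1))) &&
  ((((~~ b3) && (b6) && (~~ b17) && (~~ b16)) ==> ((false) && (b2))) &&
  ((((~~ b14) && (~~ b7) && (b12) && (b18)) ==> ((~~ b9) && (false))) &&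
  ((((~~ b14) && (b15) && (~~ b4) && (~~ b3)) ==> ((false) && (~~ b1))) &&
  ((((~~ b16) && (~~ b8) && (b12) && (b18)) ==> ((~~ b9) && (false))) &&
  ((((~~ b16) && (b17) && (~~ b6) && (~~ b3)) ==> ((false) && (~~ b2))) &&
  ((((b18) && (~~ b12) && (b7) && (~~ b14)) ==> ((~~ b9) && (false))) &&
  ((((b18) && (~~ b12) && (b8) && (~~ b16)) ==> ((~~ b9) && (false))) &&
  ((((~~ b4) && (b3) && (~~ b14) && (~~ b15)) ==> ((false) && (b1))) &&
  ((((~~ b4) && (b5) && (~~ b11) && (~~ b10)) ==> ((false) && (b0))) &&
  ((((~~ b10) && (b8) && (~~ b13) && (~~ b15)) ==> ((false) && (b7))) &&
  ((((~~ b10) && (b11) && (~~ b5) && (~~ b4)) ==> ((false) && (~~ b0))) &&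
  ((((~~ b15) && (b13) && (~~ b8) && (~~ b10)) ==> ((false) && (~~ b7))) &&
  ((((~~ b15) && (b14) && (~~ b3) && (~~ b4)) ==> ((false) && (~~ b1))) &&
  ((((~~ b5) && (b1) && (~~ b7) && (~~ b11)) ==> ((false) && (b0))) &&
  ((((~~ b5) && (b4) && (~~ b10) && (~~ b11)) ==> ((false) && (b0))) &&
  ((((~~ b11) && (b7) && (~~ b1) && (~~ b5)) ==> ((false) && (~~ b0))) &&
  ((((~~ b11) && (b10) && (~~ b4) && (~~ b5)) ==> ((false) && (~~ b0))) &&
  ((((~~ b6) && (b1) && (b13) && (~~ b17)) ==> ((false) && (b2))) &&
  ((((~~ b6) && (b3) && (~~ b16) && (~~ b17)) ==> ((false) && (b2))) &&
  ((((~~ b17) && (~~ b13) && (~~ b1) && (~~ b6)) ==> ((false) && (~~ b2))) &&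
  ((((~~ b17) && (b16) && (~~ b3) && (~~ b6)) ==> ((false) && (~~ b2))) &&
  ((((~~ b12) && (b7) && (b14) && (~~ b18)) ==> ((false) && (b9))) &&
  ((((~~ b12) && (b8) && (b16) && (~~ b18)) ==> ((false) && (b9))) &&
  ((((~~ b18) && (~~ b14) && (~~ b7) && (~~ b12)) ==> ((false) && (~~ b9))) &&
  ((((~~ b18) && (~~ b16) && (~~ b8) && (~~ b12)) ==> ((false) && (~~ b9))) &&
  (true)))))))))))))))))))))))))))))))))))))))))))))))))))))))))))))))).

Lemma chkF_true : allb (fun b0 => allb (fun b1 => allb (fun b2 => allb (fun b3 => allb (fun b4 => allb (fun b5 => allb (fun b6 => allb (fun b7 => allb (fun b8 => allb (fun b9 => allb (fun b10 => allb (fun b11 => allb (fun b12 => allb (fun b13 => allb (fun b14 => allb (fun b15 => allb (fun b16 => allb (fun b17 => allb (fun b18 => ~~ FF b0 b1 b2 b3 b4 b5 b6 b7 b8 b9 b10 b11 b12 b13 b14 b15 b16 b17 b18))))))))))))))))))).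
Proof. vm_compute. reflexivity. Qed.

Lemma FF_false b0 b1 b2 b3 b4 b5 b6 b7 b8 b9 b10 b11 b12 b13 b14 b15 b16 b17 b18 : ~~ FF b0 b1 b2 b3 b4 b5 b6 b7 b8 b9 b10 b11 b12 b13 b14 b15 b16 b17 b18.
Proof.
move: chkF_true.
move=> /allbP/(_ b0).
move=> /allbP/(_ b1).
move=> /allbP/(_ b2).
move=> /allbP/(_ b3).
move=> /allbP/(_ b4).
move=> /allbP/(_ b5).
move=> /allbP/(_ b6).
move=> /allbP/(_ b7).
move=> /allbP/(_ b8).
move=> /allbP/(_ b9).
move=> /allbP/(_ b10).
move=> /allbP/(_ b11).
move=> /allbP/(_ b12).
move=> /allbP/(_ b13).
move=> /allbP/(_ b14).
move=> /allbP/(_ b15).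
move=> /allbP/(_ b16).
move=> /allbP/(_ b17).
move=> /allbP/(_ b18).
done.
Qed.

Lemma key bs : size bs = 19 -> ~~ Fr (orient bs).
Proof.
case: bs => [|b0 [|b1 [|b2 [|b3 [|b4 [|b5 [|b6 [|b7 [|b8 [|b9 [|b10 [|b11 [|b12 [|b13 [|b14 [|b15 [|b16 [|b17 [|b18 [|//]]]]]]]]]]]]]]]]]]]] // _.
have -> : Fr (orient [:: b0; b1; b2; b3; b4; b5; b6; b7; b8; b9; b10; b11; b12; b13; b14; b15; b16; b17; b18]) = FF b0 b1 b2 b3 b4 b5 b6 b7 b8 b9 b10 b11 b12 b13 b14 b15 b16 b17 b18 by vm_compute.
exact: FF_false.
Qed.

Lemma size_edges : size edges_n = 19.
Proof. by vm_compute. Qed.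

Lemma T6nC a b : T6n a b = T6n b a.
Proof. by rewrite /T6n orbC. Qed.

Lemma mem_edges_all : all (fun a => all (fun b =>
  ((a < b) && T6n a b) ==> ((a, b) \in edges_n)) (iota 0 9)) (iota 0 9).
Proof. by vm_compute. Qed.

Lemma mem_edges a b : a < 9 -> b < 9 -> a < b -> T6n a b -> (a, b) \in edges_n.
Proof.
move=> a9 b9 ab e.
move/allP/(_ a): mem_edges_all; rewrite mem_iota a9 => /(_ isT).
move/allP/(_ b); rewrite mem_iota b9 => /(_ isT)/implyP.
by apply; rewrite ab e.
Qed.

Lemma no_orient (on : nat -> nat -> bool) :
  (forall a b, a < 9 -> b < 9 -> a != b -> T6n a b = on a b || on b a) ->
  (forall a b, a < 9 -> b < 9 -> a != b -> on a b -> on b a -> False) ->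
  (forall a b c d, uniq [:: a; b; c; d] -> all (fun i => i < 9) [:: a; b; c; d] ->
     on a b -> on b c -> on c d -> on a d -> on a c && on b d) -> False.
Proof.
move=> H1 H2 H3.
pose bs := [seq on p.1 p.2 | p <- edges_n].
have nth_bs a b : a < 9 -> b < 9 -> a < b -> T6n a b ->
    nth false bs (index (a, b) edges_n) = on a b.
  move=> a9 b9 ab e.
  by rewrite (nth_map (0, 0)) ?index_mem ?mem_edges // nth_index ?mem_edges.
have agree a b : a < 9 -> b < 9 -> a != b -> orient bs a b = on a b.
  move=> a9 b9 nab; rewrite /orient.
  case: (ltngtP a b) => [ab|ba|eab]; last by rewrite eab eqxx in nab.
  - case E: (T6n a b) => /=; first by rewrite nth_bs.
    by move: (H1 a b a9 b9 nab); rewrite E; case: (on a b).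
  - rewrite /=.
    case E: (T6n a b) => /=; last first.
      by move: (H1 a b a9 b9 nab); rewrite E; case: (on a b).
    rewrite (nth_bs b a b9 a9 ba); last by rewrite T6nC.
    move: (H1 a b a9 b9 nab) (H2 a b a9 b9 nab); rewrite E.
    by case: (on a b); case: (on b a) => //= _ /(_ isT isT).
have := key (bs := bs); rewrite size_map size_edges => /(_ erefl).
apply/negP/negPn/allP => -[[[a b] c] d] _ /=; apply/implyP => /andP[U R].
move: (U) (R) => /= ; rewrite !inE !negb_or => /and4P[/and3P[ab ac ad] /andP[bc bd] cd _].
case/and5P=> a9 b9 c9 d9 _.
rewrite !agree //.
by apply/implyP => /andP[/andP[/andP[h1 h2] h3] h4]; apply: H3.
Qed.

Lemma alternate_map (T1 T2 : eqType) (f : T1 -> T2) (w : seq T1) x y :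
  injective f -> alternate (map f w) (f x) (f y) = alternate w x y.
Proof.
move=> inj; rewrite /alternate filter_map sorted_map.
rewrite (eq_filter (a2 := fun z => (z == x) || (z == y))); last first.
  by move=> z /=; rewrite !inj_eq.
by apply: eq_sorted => a b /=; rewrite inj_eq.
Qed.

Lemma inord_neq a b : a < 9 -> b < 9 -> a != b -> (inord a : 'I_9) != inord b.
Proof.
move=> a9 b9 nab; apply/eqP => /(congr1 val); rewrite /= !inordK //.
by apply/eqP.
Qed.

Lemma T6_inord a b : a < 9 -> b < 9 -> T6 (inord a) (inord b) = T6n a b.
Proof. by move=> a9 b9; rewrite /T6 /T6n !inordK. Qed.

Lemma not_wr : ~ word_representable T6.
Proof.
move=> [w [Hall Halt]].
pose on a b := Af (inord a : 'I_9) (inord b) false w.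
apply: (@no_orient on).
- move=> a b a9 b9 nab; have nxy := inord_neq a9 b9 nab.
  have := Halt _ _ nxy; rewrite alt_Af // T6_inord // => -[].
  rewrite /on; case: (T6n a b) => //.
    by move=> _ ->.
  by case: (_ || _) => // /(_ isT).
- move=> a b a9 b9 nab; exact: (Af_anti (inord_neq a9 b9 nab) (Hall _)).
- move=> a b c d U R.
  move: (U) (R) => /=; rewrite !inE !negb_or => /and4P[/and3P[ab ac ad] /andP[bc bd] cd _].
  case/and5P=> a9 b9 c9 d9 _.
  move=> h1 h2 h3 h4.
  have U' : uniq [:: (inord a : 'I_9); inord b; inord c; inord d].
    by rewrite /= !inE !negb_or !inord_neq.
  exact: (Af_chain U' (s1 := false) (s2 := false) (s3 := false) (s4 := false) erefl h1 h2 h3 h4).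
Qed.

Definition words_n : seq (seq nat) := [::
  [:: 1; 2; 5; 3; 8; 4; 6; 1; 6; 8; 2; 7; 3; 7; 4; 5];
  [:: 0; 2; 5; 4; 7; 3; 6; 0; 6; 7; 2; 8; 4; 8; 3; 5];
  [:: 0; 1; 5; 6; 4; 7; 3; 0; 7; 8; 1; 4; 8; 3; 6; 5];
  [:: 0; 1; 6; 5; 4; 2; 7; 0; 7; 8; 1; 4; 8; 5; 2; 6];
  [:: 0; 1; 6; 2; 5; 7; 3; 0; 7; 8; 1; 8; 2; 3; 5; 6];
  [:: 0; 1; 6; 4; 2; 7; 3; 0; 7; 8; 1; 4; 8; 2; 3; 6];
  [:: 0; 2; 1; 5; 4; 7; 3; 0; 7; 2; 8; 1; 4; 8; 3; 5];
  [:: 0; 1; 6; 5; 4; 3; 2; 0; 8; 1; 4; 8; 3; 5; 2; 6];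
  [:: 0; 1; 6; 2; 5; 4; 7; 3; 0; 7; 1; 2; 4; 3; 5; 6]].

Definition good_word (v : nat) : bool :=
  let u := nth [::] words_n v in
  [&& all (fun i => (i < 9)) u, v \notin u,
      all (fun i => (i == v) || (i \in u)) (iota 0 9) &
      all (fun i => all (fun j => (i == v) || (j == v) || (i == j) ||
                        (alternate u i j == T6n i j)) (iota 0 9)) (iota 0 9)].

Lemma good_words : all good_word (iota 0 9).
Proof. by vm_compute. Qed.

Lemma wr_del (v : 'I_9) : word_representable (del_vertex T6 v).
Proof.
have /andP[/allP ok /and3P[vu /allP all_in /allP altok]] :
    good_word v by move/allP: good_words; apply; rewrite mem_iota /=.
set u := nth [::] words_n v in ok vu all_in altok.
pose u' : seq 'I_9 := [seq inord i | i <- u].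
have uu' : [seq val i | i <- u'] = u.
  rewrite -map_comp -[RHS]map_id; apply/eq_in_map => i /ok i9 /=.
  by rewrite inordK.
have mem_u' (x : 'I_9) : (x \in u') = (val x \in u).
  by rewrite -uu' (mem_map val_inj).
have alt_u' (x y : 'I_9) : alternate u' x y = alternate u (val x) (val y).
  by rewrite -uu' alternate_map //; exact: val_inj.
pose ws : seq (del_vertex_type v) := pmap insub u'.
have ws_val : [seq val i | i <- ws] = u'.
  rewrite pmap_filter; last exact: insubK.
  rewrite -[RHS]filter_predT; apply/eq_in_filter => x xu /=.
  rewrite isSome_insub; apply: contraTneq xu => ->.
  by rewrite mem_u'.
exists ws; split.
  move=> x; rewrite mem_pmap_sub mem_u'.
  have := all_in (val (val x)); rewrite mem_iota ltn_ord /= => /(_ isT).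
  by have := valP x; rewrite -val_eqE /= => /negbTE ->.
move=> x y nxy.
rewrite /del_vertex -(alternate_map _ _ _ val_inj) ws_val alt_u'.
have := altok (val (val x)); rewrite mem_iota ltn_ord => /(_ isT) /allP.
move=> /(_ (val (val y))); rewrite mem_iota ltn_ord => /(_ isT).
have := valP x; have := valP y; rewrite -!val_eqE /= => /negbTE -> /negbTE ->.
rewrite (inj_eq val_inj) (inj_eq val_inj) (negbTE nxy) /= => /eqP ->.
by rewrite /T6 /T6n.
Qed.

Theorem theorem14 :
  ~ word_representable T6 /\
  forall v : 'I_9, word_representable (del_vertex T6 v).
Proof. split; [exact: not_wr | exact: wr_del]. Qed.
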